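(* Let $Z$ be a separable scattered Tychonoff space whose scattered height $ht(Z)$ equals $2$. Then $Z$ is a $\Delta$-space.
   Context: A space is scattered if every nonempty subset $A$ has a point isolated in $A$. For $A\subseteq X$, $A^{(1)}$ is the set of non-isolated points of $A$ (in the subspace $A$). Derivatives: $X^{(0)}=X$, $X^{(\alpha+1)}=(X^{(\alpha)})^{(1)}$, $X^{(\gamma)}=\bigcap_{\alpha<\gamma}X^{(\alpha)}$ for limit $\gamma$. The scattered height $ht(X)$ of a scattered space is the least ordinal $\alpha$ with $X^{(\alpha)}=\emptyset$. A topological space $X$ is a $\Delta$-space if for every decreasing sequence $\{D_n:n\in\omega\}$ of subsets of $X$ with $\bigcap_n D_n=\emptyset$ there is a decreasing sequence $\{V_n:n\in\omega\}$ of open subsets of $X$ with $D_n\subseteq V_n$ for all $n$ and $\bigcap_n V_n=\emptyset$. *)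

(* Defs.v *)
From HB Require Import structures.
From mathcomp Require Import all_boot all_order all_algebra.
From mathcomp Require Import boolp classical_sets functions cardinality.
From mathcomp Require Import reals topology.
From mathcomp Require Import Rstruct Rstruct_topology.
Set Implicit Arguments. Unset Strict Implicit. Unset Printing Implicit Defensive.
Local Open Scope classical_set_scope.

Definition isolated_in {T : topologicalType} (A : set T) (x : T) : Prop :=
  A x /\ exists U : set T, open U /\ U `&` A = [set x].

Definition derived {T : topologicalType} (A : set T) : set T :=
  [set x | A x /\ ~ isolated_in A x].

Fixpoint derived_iter {T : topologicalType} (n : nat) (A : set T) : set T :=
  match n with
  | 0 => A
  | n'.+1 => derived (derived_iter n' A)
  end.

Definition scattered (T : topologicalType) : Prop :=
  forall A : set T, A !=set0 -> exists x, isolated_in A x.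

Definition scattered_height_eq (T : topologicalType) (n : nat) : Prop :=
  derived_iter n [set: T] = set0 /\
  forall m, (m < n)%N -> derived_iter m [set: T] !=set0.

Definition separable (T : topologicalType) : Prop :=
  exists D : set T, countable D /\ dense D.

Definition completely_regular (T : topologicalType) : Prop :=
  forall (a : T) (B : set T), closed B -> ~ B a ->
    exists f : T -> Rdefinitions.R,
      continuous f /\ f a = 0%R /\ (forall b, B b -> f b = 1%R).

Definition tychonoff_space (T : topologicalType) : Prop :=
  accessible_space T /\ completely_regular T.

Definition Delta_space (T : topologicalType) : Prop :=
  forall D : nat -> set T,
    (forall n, D n.+1 `<=` D n) ->
    \bigcap_n D n = set0 ->
    exists V : nat -> set T,
      [/\ (forall n, open (V n)),
          (forall n, V n.+1 `<=` V n),
          (forall n, D n `<=` V n) &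
          \bigcap_n V n = set0].

(* Main.v *)
Require Import Defs.
From mathcomp Require Import all_boot classical_sets topology.
From mathcomp Require Import boolp cardinality.
Set Implicit Arguments. Unset Strict Implicit.
Local Open Scope classical_set_scope.

Section Aux.
Variable Z : topologicalType.

Lemma iso_open_set1 (x : Z) : ~ derived [set: Z] x -> open [set x].
Proof.
move=> nY; have [[_ [U [oU eU]]]|ni] := pselect (isolated_in [set: Z] x).
  by rewrite setIT in eU; rewrite -eU.
by exfalso; apply: nY.
Qed.

Lemma iso_in_dense (S : set Z) (x : Z) : dense S -> open [set x] -> S x.
Proof.
move=> dS ox; have [|y [/= -> Sy]] := dS [set x] _ ox; last by [].
by exists x.
Qed.

Lemma decr_le (D : nat -> set Z) : (forall n, D n.+1 `<=` D n) ->
  forall m n, (n <= m)%N -> D m `<=` D n.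
Proof.
move=> dD m n; elim: m => [|m IH]; first by rewrite leqn0 => /eqP ->.
rewrite leq_eqVlt => /orP[/eqP -> //|]; rewrite ltnS => /IH h.
by move=> x /dD /h.
Qed.

End Aux.

Theorem corollary3p9 (Z : topologicalType) :
  separable Z -> scattered Z -> tychonoff_space Z ->
  scattered_height_eq Z 2 -> Delta_space Z.
Proof.
move=> [S [cS dS]] _ [T1 _] [h2 _] D dD capD.
set Y := derived [set: Z].
have Yiso : forall y, Y y -> exists U : set Z, open U /\ U `&` Y = [set y].
  move=> y Yy; have [[_ iso]|ni] := pselect (isolated_in Y y); first exact: iso.
  have : derived Y y by split.
  by rewrite /= in h2; rewrite /Y h2.
have hU : forall y, exists V : set Z, Y y -> open V /\ V `&` Y = [set y].
  move=> y; have [/Yiso [V HV]|nY] := pselect (Y y); first by exists V.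
  by exists set0.
have [U HU] := choice hU.
have [idx idxI] := countable_injP _ cS.
pose F n := [set x | ~ Y x /\ (idx x < n)%N].
have clF : forall n, closed (F n).
  elim=> [|n IH].
    have -> : F 0%N = set0 by apply/seteqP; split=> x //= [].
    exact: closed0.
  have -> : F n.+1 = F n `|` [set x | ~ Y x /\ idx x = n].
    apply/seteqP; split=> x /=.
      by move=> [nY]; rewrite ltnS leq_eqVlt => /orP[/eqP|]; [right|left].
    by move=> [[nY lt]|[nY <-]]; split=> //; apply: ltnW.
  apply: closedU => //.
  have [[x0 [nY0 e0]]|none] := pselect (exists x, ~ Y x /\ idx x = n).
    rewrite (_ : [set x | ~ Y x /\ idx x = n] = [set x0]).
      exact: accessible_closed_set1.
    apply/seteqP; split=> x /=; last by move=> ->.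
    move=> [nY ex]; apply: idxI; rewrite ?inE; last by rewrite ex e0.
      exact: (iso_in_dense dS (iso_open_set1 nY)).
    exact: (iso_in_dense dS (iso_open_set1 nY0)).
  have -> : [set x | ~ Y x /\ idx x = n] = set0.
    by apply/seteqP; split=> x //= [nY ex]; apply: none; exists x.
  exact: closed0.
pose V n := \bigcup_(x in [set x | ~ Y x /\ D n x]) [set x] `|`
            \bigcup_(y in [set y | Y y /\ D n y]) (U y `&` ~` F n).
exists V; split.
- move=> n; apply: openU; apply: bigcup_open => x [Yx Dx].
    exact: iso_open_set1.
  apply: openI; first by have [] := HU x Yx.
  exact: closed_openC.
- move=> n x [[y [nY Dy] /= ->]|[y [Yy Dy] [Uy nF]]].
    by left; exists y => //; split=> //; apply: dD.
  right; exists y; first by split=> //; apply: dD.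
  by split=> // -[nYx lt]; apply: nF; split=> //; apply: ltnW.
- move=> n x Dx; have [Yx|nYx] := pselect (Y x).
    right; exists x => //; split; last by move=> [].
    by have [_ /seteqP [_ /(_ x erefl) []]] := HU x Yx.
  by left; exists x.
- apply/seteqP; split=> x //= Vx; suff : (\bigcap_n D n) x by rewrite capD.
  have [Yx|nYx] := pselect (Y x).
    move=> n _; have [[y [nY Dy] /= ey]|[y [Yy Dy] [Uy nF]]] := Vx n I.
      by rewrite ey in Yx.
    have [_ /seteqP [/(_ x) hx _]] := HU y Yy.
    by have -> : x = y by apply: hx.
  move=> n _; pose m := maxn n (idx x).+1.
  have [[y [nY Dy] /= ey]|[y [Yy Dy] [Uy nF]]] := Vx m I.
    have := decr_le dD (leq_maxl n (idx x).+1) Dy. by rewrite -ey.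
  by exfalso; apply: nF; split=> //; rewrite /m leq_max ltnSn orbT.
Qed.
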